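(* Let $A$ be a linear endomorphism of $\mathbb{E}^n$, $\mathbf{b}$ an orthonormal basis, $u\in\mathbb{E}^n$ non-zero and $\hat u=u/\|u\|$. Then $$A^{\mathrm{sym}}(u)=\mathbf{A}^e(\hat u)\,u+\tfrac12\sum_{k<l}\big([A,R_{kl}](\hat u)\cdot\hat u\big)R_{kl}(u),\qquad A^{\mathrm{skew}}(u)=-\tfrac12\sum_{k<l}\big(\{A,R_{kl}\}(\hat u)\cdot\hat u\big)R_{kl}(u),$$ where $[X,Y]=XY-YX$ and $\{X,Y\}=XY+YX$.
   Context: $\mathbb{E}^n$ is $\mathbb{R}^n$ with the standard inner product; $A^*$ is the adjoint of $A$, $A^{\mathrm{sym}}=\frac12(A+A^* )$, $A^{\mathrm{skew}}=\frac12(A-A^* )$. For an orthonormal basis $\mathbf{b}=\{b_1,\dots,b_n\}$ and $1\le k<l\le n$, $R_{kl}$ is the linear map with $R_{kl}(b_k)=b_l$, $R_{kl}(b_l)=-b_k$, $R_{kl}(b_m)=0$ for $m\ne k,l$. The expansion form is $\mathbf{A}^e(u):=A(u)\cdot u$. *)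

(* Defs.v *)
(* E^n is modelled as column vectors 'cV[R]_n over a real
   closed field R (covers the reals); linear endomorphisms as n x n matrices
   acting on the left (u |-> A *m u), so the adjoint is the transpose. *)
From mathcomp Require Import all_boot all_order all_algebra.
Set Implicit Arguments. Unset Strict Implicit. Unset Printing Implicit Defensive.
Import Order.TTheory GRing.Theory Num.Theory.
Local Open Scope ring_scope.

Definition dotv {R : rcfType} {n : nat} (u v : 'cV[R]_n) : R := (u^T *m v) 0 0.

Definition normv {R : rcfType} {n : nat} (u : 'cV[R]_n) : R := Num.sqrt (dotv u u).

Definition adj {R : rcfType} {n : nat} (A : 'M[R]_n) : 'M[R]_n := A^T.
Definition symp {R : rcfType} {n : nat} (A : 'M[R]_n) : 'M[R]_n := 2^-1 *: (A + adj A).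
Definition skewp {R : rcfType} {n : nat} (A : 'M[R]_n) : 'M[R]_n := 2^-1 *: (A - adj A).

Definition expform {R : rcfType} {n : nat} (A : 'M[R]_n) (u : 'cV[R]_n) : R :=
  dotv (A *m u) u.

Definition comm_mx' {R : rcfType} {n : nat} (X Y : 'M[R]_n) : 'M[R]_n := X *m Y - Y *m X.
Definition acomm_mx {R : rcfType} {n : nat} (X Y : 'M[R]_n) : 'M[R]_n := X *m Y + Y *m X.

(* orthonormal basis: n vectors, pairwise orthonormal (hence a basis of E^n) *)
Definition orthonormal_basis {R : rcfType} {n : nat} (b : 'I_n -> 'cV[R]_n) : Prop :=
  forall i j, dotv (b i) (b j) = (i == j)%:R.

Definition is_Rkl {R : rcfType} {n : nat} (b : 'I_n -> 'cV[R]_n) (k l : 'I_n)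
    (M : 'M[R]_n) : Prop :=
  [/\ M *m b k = b l, M *m b l = - b k &
      forall m, m != k -> m != l -> M *m b m = 0].

(* Main.v *)
Require Import Defs.
From mathcomp Require Import all_boot all_order all_algebra.
From mathcomp Require Import ring.
Import Order.TTheory GRing.Theory Num.Theory.
Local Open Scope ring_scope.

Section D.
Variables (R : rcfType) (n : nat).
Implicit Types (x y z : 'cV[R]_n) (M N : 'M[R]_n).

Lemma dotvE x y : dotv x y = \sum_i x i 0 * y i 0.
Proof. by rewrite /dotv mxE; apply: eq_bigr => i _; rewrite mxE. Qed.

Lemma dotvC x y : dotv x y = dotv y x.
Proof. by rewrite !dotvE; apply: eq_bigr => i _; rewrite mulrC. Qed.

Lemma dotvDr x y z : dotv x (y + z) = dotv x y + dotv x z.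
Proof. by rewrite /dotv mulmxDr mxE. Qed.
Lemma dotvZr a x y : dotv x (a *: y) = a * dotv x y.
Proof. by rewrite /dotv -scalemxAr mxE. Qed.
Lemma dotvNr x y : dotv x (- y) = - dotv x y.
Proof. by rewrite -scaleN1r dotvZr mulN1r. Qed.
Lemma dotvBr x y z : dotv x (y - z) = dotv x y - dotv x z.
Proof. by rewrite dotvDr dotvNr. Qed.
Lemma dotv_sumr x (I : Type) (r : seq I) (P : pred I) (F : I -> 'cV[R]_n) :
  dotv x (\sum_(i <- r | P i) F i) = \sum_(i <- r | P i) dotv x (F i).
Proof. by rewrite /dotv mulmx_sumr summxE. Qed.
Lemma dotvDl x y z : dotv (y + z) x = dotv y x + dotv z x.
Proof. by rewrite dotvC dotvDr !(dotvC x). Qed.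
Lemma dotvZl a x y : dotv (a *: y) x = a * dotv y x.
Proof. by rewrite dotvC dotvZr dotvC. Qed.
Lemma dotvM M x y : dotv (M *m x) y = dotv x (M^T *m y).
Proof. by rewrite /dotv trmx_mul mulmxA. Qed.

Lemma outerE x y z : x *m (y^T *m z) = dotv y z *: x.
Proof. by rewrite {1}[y^T *m z]mx11_scalar mul_mx_scalar. Qed.

Lemma dotv_ge0 x : 0 <= dotv x x.
Proof. by rewrite dotvE; apply: sumr_ge0 => i _; rewrite -expr2 sqr_ge0. Qed.

Lemma dotv_gt0 x : x != 0 -> 0 < dotv x x.
Proof.
move=> nz; rewrite lt_def dotv_ge0 andbT; apply: contra nz => /eqP.
rewrite dotvE => /psumr_eq0P H; apply/eqP/matrixP => i j.
rewrite (ord1 j) mxE; apply/eqP; rewrite -sqrf_eq0 expr2 H //.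
by move=> k _; rewrite -expr2 sqr_ge0.
Qed.

Variable b : 'I_n -> 'cV[R]_n.
Hypothesis ob : orthonormal_basis b.

Definition Bm : 'M[R]_n := \matrix_(i, j) b j i 0.

Lemma BtB : Bm^T *m Bm = 1%:M.
Proof.
apply/matrixP => i j; rewrite !mxE -ob dotvE.
by apply: eq_bigr => k _; rewrite !mxE.
Qed.

Lemma parseval y : y = \sum_i dotv (b i) y *: b i.
Proof.
have H := mulmx1C BtB.
apply/matrixP => r c; rewrite (ord1 c) summxE.
have -> : y r 0 = (Bm *m Bm^T *m y) r 0 by rewrite H mul1mx.
rewrite -mulmxA mxE; apply: eq_bigr => i _.
rewrite !mxE mulrC dotvE; congr (_ * _); apply: eq_bigr => k _; by rewrite !mxE.
Qed.

Lemma parseval2 x y : dotv x y = \sum_i dotv (b i) x * dotv (b i) y.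
Proof.
rewrite {1}(parseval y) dotv_sumr; apply: eq_bigr => i _.
by rewrite dotvZr mulrC dotvC.
Qed.

Lemma mx_ext M N : (forall m, M *m b m = N *m b m) -> M = N.
Proof.
move=> H.
have HB : M *m Bm = N *m Bm.
  apply/matrixP => i j.
  have colB : col j Bm = b j by apply/matrixP => r c; rewrite (ord1 c) !mxE.
  have -> : (M *m Bm) i j = col j (M *m Bm) i 0 by rewrite [RHS]mxE.
  have -> : (N *m Bm) i j = col j (N *m Bm) i 0 by rewrite [RHS]mxE.
  by rewrite !colE -!mulmxA -!colE colB H.
have H1 := mulmx1C BtB.
by rewrite -(mulmx1 M) -(mulmx1 N) -H1 !mulmxA HB.
Qed.


Lemma dotvBl x y z : dotv (y - z) x = dotv y x - dotv z x.
Proof. by rewrite dotvC dotvBr !(dotvC x). Qed.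

Definition Rf (k l : 'I_n) : 'M[R]_n := b l *m (b k)^T - b k *m (b l)^T.

Lemma RfE k l x : Rf k l *m x = dotv (b k) x *: b l - dotv (b l) x *: b k.
Proof. by rewrite /Rf mulmxBl -!mulmxA !outerE. Qed.

Lemma RfT k l : (Rf k l)^T = - Rf k l.
Proof.
by apply/matrixP => i j; rewrite /Rf !mxE opprB; congr (_ - _);
  apply: eq_bigr => m _; rewrite !mxE mulrC.
Qed.

Lemma Rm_eq (k l : 'I_n) M : (k < l)%N -> is_Rkl b k l M -> M = Rf k l.
Proof.
move=> kl [H1 H2 H3]; apply: mx_ext => m.
rewrite RfE !ob.
have nkl : k != l by rewrite neq_ltn kl.
case: (eqVneq m k) => [->|mk].
  by rewrite H1 eq_sym (negbTE nkl) scale0r subr0 scale1r.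
case: (eqVneq m l) => [->|ml].
  by rewrite H2 scale0r sub0r scale1r.
by rewrite H3 // !scale0r subr0.
Qed.

Lemma sym_half (V : lmodType R) (F : 'I_n -> 'I_n -> V) :
  (forall k l, F k l = F l k) -> (forall k, F k k = 0) ->
  \sum_(k < n) \sum_(l < n | (k < l)%N) F k l = 2^-1 *: \sum_(k < n) \sum_(l < n) F k l.
Proof.
move=> Fs F0.
have E : forall k, \sum_(l < n) F k l =
   \sum_(l < n | (k < l)%N) F k l + \sum_(l < n | (l < k)%N) F k l.
  move=> k; rewrite (bigID (fun l : 'I_n => (k < l)%N)) /=; congr (_ + _).
  rewrite big_mkcond [RHS]big_mkcond; apply: eq_bigr => l _.
  case: (ltngtP k l) => //= h; rewrite (_ : l = k) ?F0 //; exact: val_inj.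
rewrite (eq_bigr _ (fun k _ => E k)) big_split /=.
have -> : \sum_(k < n) \sum_(l < n | (l < k)%N) F k l =
          \sum_(k < n) \sum_(l < n | (k < l)%N) F k l.
  rewrite (eq_bigr (fun k : 'I_n => \sum_(l < n) if (l < k)%N then F k l else 0));
    last by move=> k _; rewrite big_mkcond.
  rewrite exchange_big /=; apply: eq_bigr => k _.
  by rewrite [RHS]big_mkcond; apply: eq_bigr => l _; rewrite Fs.
rewrite -[X in X + X]scale1r -scalerDl scalerA mulVf ?scale1r //.
by rewrite pnatr_eq0.
Qed.

Lemma core x y :
  \sum_(k < n) \sum_(l < n | (k < l)%N) dotv (Rf k l *m x) y *: (Rf k l *m x)
  = dotv x x *: y - dotv x y *: x.
Proof.
rewrite sym_half; first last.
- by move=> k; rewrite RfE subrr scaler0.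
- move=> k l; have -> : Rf l k = - Rf k l by rewrite /Rf opprB.
  by rewrite mulNmx (dotvC (- _)) dotvNr (dotvC y) scaleNr scalerN opprK.
have E1 : forall k, \sum_(l < n) dotv (Rf k l *m x) y *: (Rf k l *m x) =
  (dotv (b k) x * dotv (b k) x) *: y - dotv (b k) x *: (dotv x y *: b k)
  - (dotv (b k) x * dotv (b k) y) *: x + dotv (b k) y *: (dotv x x *: b k).
  move=> k.
  transitivity (\sum_(l < n) ((dotv (b k) x * dotv (b k) x) *: (dotv (b l) y *: b l)
     - dotv (b k) x *: ((dotv (b l) x * dotv (b l) y) *: b k)
     - (dotv (b k) x * dotv (b k) y) *: (dotv (b l) x *: b l)
     + dotv (b k) y *: ((dotv (b l) x * dotv (b l) x) *: b k))).
    apply: eq_bigr => l _.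
    rewrite !RfE dotvBl !dotvZl !(dotvC _ y).
    apply/matrixP => i j; rewrite !mxE; ring.
  rewrite !big_split /= !sumrN -!scaler_sumr -!scaler_suml -!parseval -!parseval2.
  by [].
rewrite (eq_bigr _ (fun k _ => E1 k)).
transitivity (2^-1 *: \sum_(k < n) ((dotv (b k) x * dotv (b k) x) *: y
  - dotv x y *: (dotv (b k) x *: b k) - (dotv (b k) x * dotv (b k) y) *: x
  + dotv x x *: (dotv (b k) y *: b k))).
  congr (_ *: _); apply: eq_bigr => k _.
  apply/matrixP => i j; rewrite !mxE; ring.
rewrite !big_split /= !sumrN -!scaler_sumr -!scaler_suml -!parseval -!parseval2.
apply/matrixP => i j; rewrite !mxE; by field.
Qed.


Lemma dotvNl x y : dotv (- x) y = - dotv x y.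
Proof. by rewrite dotvC dotvNr dotvC. Qed.

Lemma coef_comm (A P : 'M[R]_n) x : P^T = - P ->
  dotv (comm_mx' A P *m x) x = 2 * dotv (P *m x) (symp A *m x).
Proof.
move=> PT; rewrite /comm_mx' /symp /adj mulmxBl -!mulmxA dotvBl.
rewrite [dotv (A *m _) _]dotvM [dotv (P *m (A *m x)) _]dotvM PT mulNmx dotvNr.
rewrite -scalemxAl dotvZr mulmxDl dotvDr (dotvC (A *m x)).
by field.
Qed.

Lemma coef_acomm (A P : 'M[R]_n) x : P^T = - P ->
  dotv (acomm_mx A P *m x) x = - 2 * dotv (P *m x) (skewp A *m x).
Proof.
move=> PT; rewrite /acomm_mx /skewp /adj mulmxDl -!mulmxA dotvDl.
rewrite [dotv (A *m _) _]dotvM [dotv (P *m (A *m x)) _]dotvM PT mulNmx dotvNr.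
rewrite -scalemxAl dotvZr mulmxBl dotvBr (dotvC (A *m x)).
by field.
Qed.

Lemma sym_x (A : 'M[R]_n) x : dotv x (symp A *m x) = dotv (A *m x) x.
Proof.
rewrite /symp /adj -scalemxAl dotvZr mulmxDl dotvDr -dotvM (dotvC x); by field.
Qed.

Lemma skew_x (A : 'M[R]_n) x : dotv x (skewp A *m x) = 0.
Proof.
rewrite /skewp /adj -scalemxAl dotvZr mulmxDl mulNmx dotvDr dotvNr -dotvM (dotvC x).
by rewrite subrr mulr0.
Qed.

Variable Rm : 'I_n -> 'I_n -> 'M[R]_n.
Hypothesis HR : forall k l : 'I_n, (k < l)%N -> is_Rkl b k l (Rm k l).

Lemma gen_sym (A : 'M[R]_n) x :
  dotv x x *: (symp A *m x) = dotv (A *m x) x *: x + 2^-1 *: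
   \sum_(k < n) \sum_(l < n | (k < l)%N) dotv (comm_mx' A (Rm k l) *m x) x *: (Rm k l *m x).
Proof.
have -> : \sum_(k < n) \sum_(l < n | (k < l)%N) dotv (comm_mx' A (Rm k l) *m x) x *: (Rm k l *m x)
  = 2 *: \sum_(k < n) \sum_(l < n | (k < l)%N) dotv (Rf k l *m x) (symp A *m x) *: (Rf k l *m x).
  rewrite scaler_sumr; apply: eq_bigr => k _; rewrite scaler_sumr; apply: eq_bigr => l kl.
  by rewrite (@Rm_eq k l _ kl (HR k l kl)) coef_comm ?RfT // scalerA.
rewrite core sym_x scalerA mulVf ?pnatr_eq0 // scale1r.
by rewrite addrC subrK.
Qed.

Lemma gen_skew (A : 'M[R]_n) x :
  dotv x x *: (skewp A *m x) = - (2^-1 *: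
   \sum_(k < n) \sum_(l < n | (k < l)%N) dotv (acomm_mx A (Rm k l) *m x) x *: (Rm k l *m x)).
Proof.
have -> : \sum_(k < n) \sum_(l < n | (k < l)%N) dotv (acomm_mx A (Rm k l) *m x) x *: (Rm k l *m x)
  = (- 2) *: \sum_(k < n) \sum_(l < n | (k < l)%N) dotv (Rf k l *m x) (skewp A *m x) *: (Rf k l *m x).
  rewrite scaler_sumr; apply: eq_bigr => k _; rewrite scaler_sumr; apply: eq_bigr => l kl.
  by rewrite (@Rm_eq k l _ kl (HR k l kl)) coef_acomm ?RfT // scalerA.
rewrite core skew_x scale0r subr0 scalerA mulrN scaleNr opprK mulVf ?pnatr_eq0 // scale1r.
by [].
Qed.

End D.

Theorem corollary2p12 (R : rcfType) (n : nat) (A : 'M[R]_n)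
    (b : 'I_n -> 'cV[R]_n) (Rm : 'I_n -> 'I_n -> 'M[R]_n) (u : 'cV[R]_n) :
  orthonormal_basis b ->
  (forall k l : 'I_n, (k < l)%N -> is_Rkl b k l (Rm k l)) ->
  u != 0 ->
  let uh := (normv u)^-1 *: u in
  symp A *m u =
    expform A uh *: u
    + 2^-1 *: \sum_(k < n) \sum_(l < n | (k < l)%N)
        dotv (comm_mx' A (Rm k l) *m uh) uh *: (Rm k l *m u)
  /\
  skewp A *m u =
    - (2^-1 *: \sum_(k < n) \sum_(l < n | (k < l)%N)
        dotv (acomm_mx A (Rm k l) *m uh) uh *: (Rm k l *m u)).
Proof.
move=> ob HR unz uh.
set nu := normv u.
have dpos := @dotv_gt0 R n u unz.
have nupos : 0 < nu by rewrite /nu /normv sqrtr_gt0.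
have nu2 : nu * nu = dotv u u by rewrite -expr2 sqr_sqrtr // ltW.
have nu0 : nu != 0 by rewrite gt_eqF.
set c := nu^-1 * nu^-1.
have c2 : c * dotv u u = 1 by rewrite -nu2 /c; field.
have coef X : dotv (X *m uh) uh = c * dotv (X *m u) u.
  by rewrite /uh -scalemxAr dotvZl dotvZr mulrA.
split.
- have -> : \sum_(k < n) \sum_(l < n | (k < l)%N)
        dotv (comm_mx' A (Rm k l) *m uh) uh *: (Rm k l *m u)
      = c *: \sum_(k < n) \sum_(l < n | (k < l)%N)
        dotv (comm_mx' A (Rm k l) *m u) u *: (Rm k l *m u).
    rewrite scaler_sumr; apply: eq_bigr => k _; rewrite scaler_sumr.
    by apply: eq_bigr => l _; rewrite coef scalerA.
  rewrite /expform coef.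
  transitivity (c *: (dotv u u *: (symp A *m u))); first by rewrite scalerA c2 scale1r.
  rewrite (@gen_sym R n b ob Rm HR A u) scalerDr !scalerA (mulrC c 2^-1); congr (_ + _ *: _).
- have -> : \sum_(k < n) \sum_(l < n | (k < l)%N)
        dotv (acomm_mx A (Rm k l) *m uh) uh *: (Rm k l *m u)
      = c *: \sum_(k < n) \sum_(l < n | (k < l)%N)
        dotv (acomm_mx A (Rm k l) *m u) u *: (Rm k l *m u).
    rewrite scaler_sumr; apply: eq_bigr => k _; rewrite scaler_sumr.
    by apply: eq_bigr => l _; rewrite coef scalerA.
  transitivity (c *: (dotv u u *: (skewp A *m u))); first by rewrite scalerA c2 scale1r.
  rewrite (@gen_skew R n b ob Rm HR A u) scalerN !scalerA (mulrC c 2^-1); congr (- (_ *: _)).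
Qed.
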